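(* Let $G=\langle a,b\mid a^n=1,\ b^t=a^k,\ b^{-1}ab=a^r\rangle$ with natural numbers $n,t,k,r$ satisfying $r^t\equiv1\pmod n$ and $k(r-1)\equiv0\pmod n$. Let $(v,i,c)\in\mathfrak{N}$ and $(v,\alpha_1,\beta_1),(v,\alpha_2,\beta_2)\in X_{v,i,c}$. Then $H_{v,\alpha_1,\beta_1o_v}$ and $H_{v,\alpha_2,\beta_2o_v}$ are conjugate in $G$ if and only if $\beta_1=\beta_2$ and $\alpha_1\equiv\alpha_2r^j\pmod v$ for some integer $j$.
   Context: For a divisor $v$ of $n$: $o_v=\operatorname{ord}_v(r)$, $\mathcal{B}_{o_v}=\{(w,i,c)\in\mathbb{Z}^3: w>0,\ w\mid n,\ w\mid r^{o_v}-1,\ o_vc>0,\ o_vc\mid t,\ w\mid k+i\tfrac{t}{o_vc}\}$. For integers $v,i,c$, $H_{v,i,c}=\langle a^v,a^ib^c\rangle$. $\mathfrak{N}=\{(v,i,c)\in\mathbb{Z}^3: v>0,\ v\mid n,\ c>0,\ c\mid t,\ 0\le i\le v-1,\ v\mid k+i\tfrac tc,\ o_v\mid c,\ v\mid i(r-1)\}$. For $(v,i,c)\in\mathfrak{N}$, $X_{v,i,c}$ is the set of $(v,\alpha,\beta)\in\mathcal{B}_{o_v}$ with $\beta o_v\mid c$, $\alpha\frac{c}{\beta o_v}\equiv i\pmod v$, $\beta=\frac{c\gcd(\alpha(r-1),v)}{v\,o_v}$ and $\gcd(v,\alpha,\beta)=1$. *)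

(* Defs.v *)
From mathcomp Require Import all_boot all_order all_algebra all_fingroup.
Set Implicit Arguments.
Unset Strict Implicit.
Unset Printing Implicit Defensive.
Import GRing.Theory Num.Theory.

Definition zexpg (gT : finGroupType) (x : gT) (z : int) : gT :=
  match z with
  | Posz m => (x ^+ m)%g
  | Negz m => (x ^- m.+1)%g
  end.

(* When gcd(r,v)=1
   this order is at most v, so searching in 1..v suffices (returns 0 if no
   such m exists, which never happens under the standing hypotheses). *)
Definition ordv (v r : nat) : nat :=
  head 0%N [seq m <- iota 1 v | r ^ m == 1 %[mod v]].

(* G = < a, b | a^n = 1, b^t = a^k, b^-1 a b = a^r >, realized as a finite
   group G generated by a and b satisfying the relations, with the universal
   property of the presentation with respect to all finite groups. *)
Definition is_metacyclic_presentation (gT : finGroupType) (G : {group gT})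
    (a b : gT) (n t k r : nat) : Prop :=
  [/\ G :=: <<[set a; b]>>%g,
      (a ^+ n = 1)%g, (b ^+ t = a ^+ k)%g, (a ^ b = a ^+ r)%g &
      forall (rT : finGroupType) (x y : rT),
        (x ^+ n = 1)%g -> (y ^+ t = x ^+ k)%g -> (x ^ y = x ^+ r)%g ->
        exists f : {morphism G >-> rT}, f a = x /\ f b = y].

Definition Hsub (gT : finGroupType) (a b : gT) (v : nat) (i c : int) : {set gT} :=
  <<[set (a ^+ v)%g; (zexpg a i * zexpg b c)%g]>>%g.

Definition in_frakN (n t k r v i c : nat) : Prop :=
  [/\ (0 < v)%N, (v %| n)%N, (0 < c)%N, (c %| t)%N & (i <= v - 1)%N] /\
  [/\ (v%:Z %| (k%:Z + i%:Z * (t %/ c)%N%:Z)%R)%Z,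
      (ordv v r %| c)%N &
      (v%:Z %| (i%:Z * (r%:Z - 1))%R)%Z].

Definition in_B (n t k r o : nat) (w i c : int) : Prop :=
  [/\ (0 < w)%R, (w %| n%:Z)%Z & (w %| (r%:Z ^+ o - 1)%R)%Z] /\
  [/\ (0 < o%:Z * c)%R, ((o%:Z * c)%R %| t%:Z)%Z &
      (w %| (k%:Z + i * (t%:Z %/ (o%:Z * c)%R)%Z)%R)%Z].

(* (v, alpha, beta) \in X_{v,i,c}; the condition
   beta = c gcd(alpha(r-1), v) / (v o_v) is written multiplicatively
   (v o_v > 0, so this is equivalent). *)
Definition in_X (n t k r v i c : nat) (alpha beta : int) : Prop :=
  let o := ordv v r in
  [/\ in_B n t k r o v%:Z alpha beta,
      ((beta * o%:Z)%R %| c%:Z)%Z,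
      ((alpha * (c%:Z %/ (beta * o%:Z)%R)%Z)%R = i%:Z %[mod v%:Z])%Z,
      (beta * (v%:Z * o%:Z) = c%:Z * (gcdz (alpha * (r%:Z - 1)) v%:Z))%R &
      gcdz (gcdz v%:Z alpha) beta = 1%R].

(* x = y * r^j (mod v) for an integer j; for j < 0, r^j denotes the
   inverse of r^|j| modulo v, i.e. the condition reads x * r^|j| = y. *)
Definition congr_rpow (v r : nat) (x y : int) (j : int) : Prop :=
  match j with
  | Posz m => (x = (y * r%:Z ^+ m)%R %[mod v%:Z])%Z
  | Negz m => ((x * r%:Z ^+ m.+1)%R = y %[mod v%:Z])%Z
  end.

(* Main.v *)
Require Import Defs.
From mathcomp Require Import all_boot all_order all_algebra all_fingroup.
From mathcomp Require Import zify.
Import GRing.Theory Num.Theory.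

Definition mk (t' v' : nat) (y x : nat) : 'I_t'.+1 * 'I_v'.+1 := (inZp y, inZp x).

Lemma mk_eq t' v' y x y' x' :
  (mk t' v' y x = mk t' v' y' x') <-> (y = y' %[mod t'.+1] /\ x = x' %[mod v'.+1]).
Proof.
split.
  move=> E; have := congr1 (fun p => nat_of_ord p.1) E; have := congr1 (fun p => nat_of_ord p.2) E.
  by rewrite /= => -> ->.
by case=> h1 h2; rewrite /mk; congr pair; apply/val_inj => /=.
Qed.

Lemma mk_val t' v' (p : 'I_t'.+1 * 'I_v'.+1) : p = mk t' v' p.1 p.2.
Proof. by case: p => y x; rewrite /mk !valZpK. Qed.

Definition Af t' v' (p : 'I_t'.+1 * 'I_v'.+1) := mk t' v' p.1 (p.2 + 1).
Definition Bf t' v' r k (p : 'I_t'.+1 * 'I_v'.+1) :=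
  mk t' v' p.1.+1 (r * p.2 + (p.1.+1 == t'.+1) * k).

Arguments Af {t' v'} p.
Arguments Bf {t' v'} r k p.

Lemma Af_mk t' v' y x : Af (mk t' v' y x) = mk t' v' y (x + 1).
Proof. by rewrite /Af /=; apply/mk_eq; rewrite !modn_mod modnDml. Qed.

Lemma iterA t' v' m y x : iter m (@Af t' v') (mk t' v' y x) = mk t' v' y (x + m).
Proof.
elim: m => [|m IH] /=; first by rewrite addn0.
by rewrite IH Af_mk -[m.+1]addn1 addnA.
Qed.

Lemma Bf_mk t' v' r k y x : y < t'.+1 ->
  Bf r k (mk t' v' y x) = mk t' v' y.+1 (r * x + (y.+1 == t'.+1) * k).
Proof.
move=> hy; rewrite /Bf /= (modn_small hy); apply/mk_eq; split => //.
by rewrite -modnDml modnMmr modnDml.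
Qed.

Lemma iterB1 t' v' r k j y x : y + j < t'.+1 ->
  iter j (Bf r k) (mk t' v' y x) = mk t' v' (y + j) (r ^ j * x).
Proof.
elim: j => [|j IH] hj /=; first by rewrite addn0 mul1n.
rewrite IH; last by lia.
rewrite Bf_mk; last by lia.
have -> : ((y + j).+1 == t'.+1) = false by apply/eqP; lia.
by rewrite mul0n addn0 addnS expnS mulnA.
Qed.

Lemma iterB2 t' v' r k j y x : y + j.+1 = t'.+1 ->
  iter j.+1 (Bf r k) (mk t' v' y x) = mk t' v' 0 (r ^ j.+1 * x + k).
Proof.
move=> hj /=; rewrite iterB1; last by lia.
rewrite Bf_mk; last by lia.
have -> : ((y + j).+1 == t'.+1) = true by apply/eqP; lia.
rewrite mul1n expnS mulnA; apply/mk_eq; split => //.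
by rewrite -addnS hj modnn mod0n.
Qed.

Lemma iterB_fst t' v' r k j (p : 'I_t'.+1 * 'I_v'.+1) :
  (iter j (Bf r k) p).1 = inZp (p.1 + j).
Proof.
elim: j => [|j IH] /=; first by rewrite addn0 valZpK.
rewrite /Bf /= IH; apply/val_inj => /=.
rewrite -[((p.1 + j) %% t'.+1).+1]addn1 modnDml; congr (_ %% _); lia.
Qed.

Lemma mulmodl d z x y : x = y %[mod d] -> z * x = z * y %[mod d].
Proof. by move=> h; rewrite -modnMmr h modnMmr. Qed.

Lemma powmod1 d r T x : r ^ T = 1 %[mod d] -> r ^ T * x = x %[mod d].
Proof. by move=> h; rewrite -modnMml h modnMml mul1n. Qed.

Lemma Af_inj t' v' : injective (@Af t' v').
Proof.
move=> p q; rewrite [p]mk_val [q]mk_val !Af_mk => /mk_eq [h1 h2].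
apply/mk_eq; split => //; apply/eqP; move/eqP: h2; by rewrite eqn_modDr.
Qed.

Lemma Bf_inj t' v' r k : r ^ t'.+1 = 1 %[mod v'.+1] -> injective (@Bf t' v' r k).
Proof.
move=> hr p q; rewrite [p]mk_val [q]mk_val !Bf_mk ?ltn_ord // => /mk_eq [h1 h2].
have e1 : (p.1 : nat) = q.1.
  move/eqP: h1; rewrite -[(p.1 : nat).+1]addn1 -[(q.1 : nat).+1]addn1 eqn_modDr !modn_small ?ltn_ord // => /eqP.
  by [].
rewrite e1 in h2 *; apply/mk_eq; split => //.
move/eqP: h2; rewrite eqn_modDr => /eqP /(mulmodl _ (r ^ t')).
by rewrite !mulnA -expnSr !powmod1.
Qed.

Definition PA t' v' : {perm 'I_t'.+1 * 'I_v'.+1} := perm (@Af_inj t' v').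
Definition PB t' v' r k (hr : r ^ t'.+1 = 1 %[mod v'.+1]) : {perm 'I_t'.+1 * 'I_v'.+1} :=
  perm (@Bf_inj t' v' r k hr).
Arguments PB {t' v' r} k hr.

Lemma PA_rel1 t' v' n : v'.+1 %| n -> (PA t' v' ^+ n = 1)%g.
Proof.
move=> hn; apply/permP => p; rewrite permX perm1.
have -> : iter n (PA t' v') p = iter n Af p.
  by apply: eq_iter => x; rewrite permE.
rewrite (mk_val _ _ p) iterA; apply/mk_eq; split => //.
by rewrite -modnDmr (eqP hn) addn0.
Qed.

Lemma kpow d k r y : k * r = k %[mod d] -> k * r ^ y = k %[mod d].
Proof.
move=> h; elim: y => [|y IH]; first by rewrite muln1.
by rewrite expnSr mulnA -modnMml IH modnMml.
Qed.

Lemma PB_rel2 t' v' r k (hr : r ^ t'.+1 = 1 %[mod v'.+1]) :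
  k * r = k %[mod v'.+1] -> (PB k hr ^+ t'.+1 = PA t' v' ^+ k)%g.
Proof.
move=> hk; apply/permP => p; rewrite !permX.
have -> : iter t'.+1 (PB k hr) p = iter t'.+1 (Bf r k) p.
  by apply: eq_iter => x; rewrite permE.
have -> : iter k (PA t' v') p = iter k Af p.
  by apply: eq_iter => x; rewrite permE.
rewrite (mk_val _ _ p) iterA.
have hy := ltn_ord p.1.
have -> : iter t'.+1 (Bf r k) (mk t' v' p.1 p.2) =
  iter (p.1 + (t'.+1 - p.1)) (Bf r k) (mk t' v' p.1 p.2) by rewrite subnKC // ltnW.
rewrite iterD.
case E: (t'.+1 - p.1) => [|j]; first by lia.
rewrite iterB2; last by lia.
rewrite -[mk _ _ 0 _]/(mk t' v' (0 + 0) _) iterB1 ?add0n; last by lia.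
apply/mk_eq; split => //.
rewrite mulnDr mulnA -expnD (_ : p.1 + j.+1 = t'.+1); last by lia.
by rewrite -modnDm powmod1 // mulnC kpow // modnDm.
Qed.

Lemma PAB_rel3 t' v' r k (hr : r ^ t'.+1 = 1 %[mod v'.+1]) :
  (PA t' v' ^ PB k hr = PA t' v' ^+ r)%g.
Proof.
suff h : (PA t' v' * PB k hr = PB k hr * PA t' v' ^+ r)%g.
  by rewrite conjgE mulgA -mulgA h mulgA mulVg mul1g.
apply/permP => p; rewrite !permM permX.
have -> : iter r (PA t' v') (PB k hr p) = iter r Af (PB k hr p).
  by apply: eq_iter => x; rewrite permE.
rewrite !permE (mk_val _ _ p) Af_mk !Bf_mk ?ltn_ord // iterA.
apply/mk_eq; split => //; congr (_ %% _); lia.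
Qed.


Lemma g_apply t' v' r k (hr : r ^ t'.+1 = 1 %[mod v'.+1]) m c p :
  ((PA t' v' ^+ m * PB k hr ^+ c)%g p) = iter c (Bf r k) (iter m Af p).
Proof.
rewrite permM !permX.
have -> : iter m (PA t' v') p = iter m Af p by apply: eq_iter => x; rewrite permE.
by apply: eq_iter => x; rewrite permE.
Qed.

Lemma iterA_fst t' v' m (q : 'I_t'.+1 * 'I_v'.+1) : (iter m Af q).1 = q.1.
Proof. by rewrite (mk_val _ _ q) iterA /= valZpK. Qed.

Lemma fst_orbit t' v' r k (hr : r ^ t'.+1 = 1 %[mod v'.+1]) m c j :
  (((PA t' v' ^+ m * PB k hr ^+ c) ^+ j)%g (mk t' v' 0 0)).1 = inZp (j * c).
Proof.
elim: j => [|j IH]; first by rewrite expg0 perm1 mul0n.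
rewrite expgSr permM g_apply iterB_fst iterA_fst IH.
apply/val_inj => /=; rewrite modnDml; congr (_ %% _); lia.
Qed.

Lemma x_orbit t' v' r k (hr : r ^ t'.+1 = 1 %[mod v'.+1]) m c :
  0 < c -> c %| t'.+1 -> r ^ c = 1 %[mod v'.+1] ->
  (k + m * (t'.+1 %/ c)) %% v'.+1 = 0 ->
  forall j, exists2 i, i < t'.+1 %/ c &
    (((PA t' v' ^+ m * PB k hr ^+ c) ^+ j)%g (mk t' v' 0 0)) = mk t' v' (i * c) (i * m).
Proof.
move=> c0 cT rc hk j.
have sc : t'.+1 %/ c * c = t'.+1 by rewrite divnK.
have s0 : 0 < t'.+1 %/ c by rewrite divn_gt0 // dvdn_leq.
elim: j => [|j [i hi IH]]; first by exists 0 => //; rewrite expg0 perm1.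
rewrite expgSr permM g_apply IH iterA.
have hic : i * c < t'.+1 by rewrite -sc ltn_pmul2r.
case: (ltnP i.+1 (t'.+1 %/ c)) => hi1.
  exists i.+1 => //.
  have hic1 : i.+1 * c < t'.+1 by rewrite -sc ltn_pmul2r.
  rewrite iterB1; last by rewrite mulSn addnC in hic1.
  apply/mk_eq; split; first by rewrite mulSn addnC.
  by rewrite powmod1 // mulSn addnC.
have ei : i.+1 = t'.+1 %/ c by apply/eqP; rewrite eqn_leq hi1 hi.
exists 0 => //.
have [c' ec] : exists c', c = c'.+1 by exists c.-1; lia.
rewrite ec iterB2 -?ec; last by rewrite -sc -ei mulSn addnC ec.
apply/mk_eq; split => //.
rewrite mul0n mod0n -modnDml powmod1 // modnDml.
by rewrite -hk -ei; congr (_ %% _); lia.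
Qed.

Arguments fst_orbit {t' v' r} k hr m c j.
Arguments x_orbit {t' v' r} k hr m c.
Arguments g_apply {t' v' r} k hr m c p.

Lemma dvd_from_orbit t' c1 c2 j :
  c2 %| t'.+1 -> (inZp c1 : 'I_t'.+1) = inZp (j * c2) -> c2 %| c1.
Proof.
move=> h2 /(congr1 (@nat_of_ord _)) /= e.
rewrite /dvdn -(modn_dvdm c1 h2) e (modn_dvdm _ h2) modnMl.
by [].
Qed.

Lemma R_main t' v' r k (hr : r ^ t'.+1 = 1 %[mod v'.+1]) c1 c2 m1 m2 :
  0 < c1 -> c1 %| t'.+1 -> 0 < c2 -> c2 %| t'.+1 ->
  r ^ c1 = 1 %[mod v'.+1] ->
  (k + m2 * (t'.+1 %/ c2)) %% v'.+1 = 0 ->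
  (PA t' v' ^+ m1 * PB k hr ^+ c1)%g \in <[(PA t' v' ^+ m2 * PB k hr ^+ c2)%g]>%g ->
  (PA t' v' ^+ m2 * PB k hr ^+ c2)%g \in <[(PA t' v' ^+ m1 * PB k hr ^+ c1)%g]>%g ->
  c1 = c2 /\ m1 = m2 %[mod v'.+1].
Proof.
move=> c10 c1T c20 c2T rc hk /cycleP [j hj] /cycleP [j' hj'].
have e1 := fst_orbit k hr m1 c1 1; rewrite expg1 hj fst_orbit mul1n in e1.
have e2 := fst_orbit k hr m2 c2 1; rewrite expg1 hj' fst_orbit mul1n in e2.
have d21 := @dvd_from_orbit _ _ _ _ c2T (esym e1).
have d12 := @dvd_from_orbit _ _ _ _ c1T (esym e2).
have ec : c1 = c2 by apply/eqP; rewrite eqn_dvd d12 d21.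
split => //; subst c2.
have rc2 : r ^ c1 = 1 %[mod v'.+1] by [].
have [i hi hx] := x_orbit k hr m2 c1 c20 c2T rc hk j.
rewrite -hj g_apply [iter m1 _ _]iterA add0n in hx.
have sc : t'.+1 %/ c1 * c1 = t'.+1 by rewrite divnK.
have hic : i * c1 < t'.+1 by rewrite -sc ltn_pmul2r.
case: (ltnP c1 t'.+1) => hcT.
  rewrite iterB1 ?add0n // in hx.
  move/mk_eq: hx => [h1 h2].
  rewrite !modn_small // in h1.
  have ei : i = 1.
    by apply/eqP; rewrite -(eqn_pmul2r c10) mul1n -h1.
  by rewrite ei mul1n powmod1 in h2.
have ecT : c1 = t'.+1 by apply/eqP; rewrite eqn_leq hcT dvdn_leq.
have s1 : t'.+1 %/ c1 = 1 by rewrite ecT divnn.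
have i0 : i = 0 by move: hi; rewrite s1; lia.
have [c' ec'] : exists c', c1 = c'.+1 by exists c1.-1; lia.
move: hx; rewrite ec' iterB2 -?ec'; last by lia.
rewrite i0 !mul0n => /mk_eq [_ h2].
rewrite s1 muln1 in hk.
apply/eqP; rewrite -(eqn_modDr k); apply/eqP.
by rewrite -modnDml -(powmod1 _ _ _ m1 rc) modnDml h2 addnC hk.
Qed.


Lemma PoszX r o : Posz (r ^ o) = (Posz r ^+ o)%R.
Proof. by elim: o => [|o IH]; rewrite ?expn0 ?expr0 // expnS exprS PoszM IH. Qed.

Lemma zcong_nat x y v : (x%:Z = y%:Z %[mod v%:Z])%Z <-> x = y %[mod v].
Proof. by rewrite !modz_nat; split => [[]|->]. Qed.

Lemma pmod_v (al : int) n v : 0 < n -> v %| n ->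
  ((`|(al %% n%:Z)%Z|%N)%:Z = al %[mod v%:Z])%Z.
Proof.
move=> n0 /dvdnP [u hu].
rewrite gez0_abs; last by rewrite modz_ge0 //; lia.
by rewrite [in RHS](divz_eq al n%:Z) hu PoszM mulrA modzMDl.
Qed.

Lemma hk_nat k r n : (k%:Z * (r%:Z - 1) = 0 %[mod n%:Z])%Z -> k * r = k %[mod n].
Proof.
move=> hk; have : (n%:Z %| (k%:Z * (r%:Z - 1))%R)%Z by apply/dvdz_mod0P; rewrite hk mod0z.
rewrite mulrBr mulr1 -PoszM -eqz_mod_dvd => /eqP.
by move/zcong_nat.
Qed.

Lemma rpow1 r o b v : (r ^ o)%N = 1 %[mod v] -> (r ^ (b * o))%N = 1 %[mod v].
Proof. by move=> h; rewrite mulnC expnM -modnXm h modnXm exp1n. Qed.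

Lemma inB_facts n t k r o v (al be : int) : 0 < n -> in_B n t k r o v%:Z al be ->
  exists b', [/\ be = Posz b', 0 < o * b', (o * b') %| t, 0 < v & v %| n] /\
    (r ^ o)%N = 1 %[mod v] /\ (k + `|(al %% n%:Z)%Z|%N * (t %/ (o * b'))) %% v = 0.
Proof.
move=> n0 [[v0 vn vro] [ob0 obt hk1]].
case: be ob0 obt hk1 => b' ob0 obt hk1; last first.
  by exfalso; move: ob0; rewrite NegzE mulrN -PoszM oppr_gt0; lia.
rewrite -PoszM in ob0 obt hk1.
have vn' : v %| n by move: vn; rewrite dvdzE !absz_nat.
have h1 : 0 < o * b' by move: ob0; rewrite ltz_nat.
have h2 : (o * b') %| t by move: obt; rewrite dvdzE !absz_nat.
have h3 : 0 < v by move: v0; rewrite ltz_nat.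
have h4 : (r ^ o)%N = 1 %[mod v].
  move: vro; rewrite -PoszX -eqz_mod_dvd => /eqP.
  by move/zcong_nat.
have h5 : (k + `|(al %% n%:Z)%Z|%N * (t %/ (o * b'))) %% v = 0.
  rewrite divz_nat in hk1.
  apply/eqP; rewrite -eqz_nat -modz_nat PoszD PoszM.
  rewrite -modzDmr -modzMml pmod_v // modzMml modzDmr.
  by apply/eqP/dvdz_mod0P.
by exists b'.
Qed.

Local Open Scope group_scope.

Definition K (gT : finGroupType) (a b : gT) (v c m : nat) : {set gT} :=
  <<[set (a ^+ v)%g; (a ^+ m * b ^+ c)%g]>>%g.

Arguments K {gT} a b v c m.

Lemma conjXself (gT : finGroupType) (x : gT) m : ((x ^+ m) ^ x = x ^+ m)%g.
Proof. by rewrite conjgE -expgSr expgS mulKg. Qed.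

Lemma gen2_shift (gT : finGroupType) (u w : gT) q :
  <<[set u; w]>>%g = <<[set u; (u ^+ q * w)%g]>>%g.
Proof.
apply/eqP; rewrite eqEsubset !gen_subG; apply/andP; split;
  apply/subsetP => x /set2P [->|->].
- exact: mem_gen (set21 _ _).
- have hu : u ^+ q \in <<[set u; u ^+ q * w]>> by apply/groupX/mem_gen/set21.
  by rewrite -(groupMl w hu) mem_gen ?set22.
- exact: mem_gen (set21 _ _).
- apply: groupM; last exact: mem_gen (set22 _ _).
  by apply/groupX; exact: mem_gen (set21 _ _).
Qed.

Lemma gen2_swap (gT : finGroupType) (u u' w : gT) :
  u' \in <[u]>%g -> u \in <[u']>%g -> <<[set u; w]>>%g = <<[set u'; w]>>%g.
Proof.
move=> h1 h2; apply/eqP; rewrite eqEsubset !gen_subG; apply/andP; split;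
  apply/subsetP => x /set2P [->|->].
- by apply: (subsetP _ _ h2); rewrite cycle_subG; exact: mem_gen (set21 _ _).
- exact: mem_gen (set22 _ _).
- by apply: (subsetP _ _ h1); rewrite cycle_subG; exact: mem_gen (set21 _ _).
- exact: mem_gen (set22 _ _).
Qed.

Lemma powv (gT : finGroupType) (x : gT) n v e f :
  0 < n -> (x ^+ n = 1)%g -> v %| n -> e = f %[mod v] ->
  exists q, (x ^+ e = x ^+ f * (x ^+ v) ^+ q)%g.
Proof.
move=> n0 xn vn ef.
have hle : f <= e + n * f by nia.
have hd : v %| e + n * f - f.
  rewrite -eqn_mod_dvd //; apply/eqP.
  by rewrite -modnDmr -modnMml (eqP vn) mul0n mod0n addn0.
exists ((e + n * f - f) %/ v).
have -> : (x ^+ e = x ^+ (e + n * f))%g by rewrite expgD expgM xn expg1n mulg1.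
by rewrite -expgM (mulnC v) divnK // -expgD subnKC.
Qed.

Lemma Kmod (gT : finGroupType) (a b : gT) v c m :
  K a b v c m = K a b v c (m %% v).
Proof.
rewrite /K {1}(divn_eq m v) expgD mulnC expgM -mulgA.
by rewrite -gen2_shift.
Qed.


Lemma K_eqmod (gT : finGroupType) (a b : gT) v c m1 m2 :
  m1 = m2 %[mod v] -> K a b v c m1 = K a b v c m2.
Proof. by move=> e; rewrite Kmod e -Kmod. Qed.

Lemma conj_pow (gT : finGroupType) (a b : gT) r c :
  a ^ b = a ^+ r -> a ^ (b ^+ c) = a ^+ (r ^ c)%N.
Proof.
move=> hab; elim: c => [|c IH]; first by rewrite expg0 conjg1 expn0 expg1.
by rewrite expgSr conjgM IH conjXg hab -expgM expnS.
Qed.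

Lemma conj_set2 (gT : finGroupType) (x y g : gT) :
  [set x; y] :^ g = [set x ^ g; y ^ g].
Proof.
apply/setP => z; rewrite mem_conjg !inE.
by rewrite !(can2_eq (conjgKV g) (conjgK g)).
Qed.

Lemma K_conj_b (gT : finGroupType) (a b : gT) n t r v c m :
  0 < n -> a ^+ n = 1 -> (r ^ t)%N = 1 %[mod n] -> 0 < t -> a ^ b = a ^+ r ->
  K a b v c m :^ b = K a b v c (m * r).
Proof.
move=> n0 an hrt t0 hab.
rewrite /K -genJ conj_set2 conjXg hab conjMg conjXg hab conjXself -!expgM.
rewrite [in RHS](mulnC m).
apply: esym; apply: gen2_swap.
  by apply/cycleP; exists r; rewrite -expgM mulnC.
apply/cycleP; exists (r ^ t.-1)%N.
have art : a ^+ (r ^ t)%N = a.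
  by rewrite -(expg_mod _ an) hrt (expg_mod _ an) expg1.
by rewrite -expgM (mulnC r) -mulnA -expnS prednK // mulnC expgM art.
Qed.

Lemma K_conj_a (gT : finGroupType) (a b : gT) n r v c m :
  0 < n -> a ^+ n = 1 -> v %| n -> (r ^ c)%N = 1 %[mod v] -> a ^ b = a ^+ r ->
  K a b v c m :^ a = K a b v c m.
Proof.
move=> n0 an vn hrc hab.
apply/eqP; rewrite eqEcard cardJg leqnn andbT.
rewrite /K -genJ gen_subG; apply/subsetP => x; rewrite mem_conjg => /set2P [] e;
  rewrite -(conjgKV a x) e.
  by rewrite conjXself mem_gen ?set21.
have [q hq] := @powv _ a n v _ 1 n0 an vn hrc.
set w := (a ^+ v) ^+ q in hq.
have H : a ^ (b ^+ c) = a * w by rewrite (@conj_pow _ _ _ _ c hab) hq expg1.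
have H2 : a * b ^+ c = b ^+ c * (a * w) by rewrite -H conjgE mulKVg.
have H3 : b ^+ c * a = a * b ^+ c * w^-1 by rewrite H2 !mulgA mulgK.
rewrite conjMg conjXself conjgE H3 -!mulgA mulKg mulgA.
apply: groupM; first by rewrite mem_gen ?set22.
by rewrite groupV groupX // mem_gen ?set21.
Qed.

Lemma K_conj_G (gT : finGroupType) (a b : gT) n t r v c :
  0 < n -> a ^+ n = 1 -> (r ^ t)%N = 1 %[mod n] -> 0 < t -> a ^ b = a ^+ r ->
  v %| n -> (r ^ c)%N = 1 %[mod v] ->
  forall g, g \in <<[set a; b]>> -> forall m, exists y,
    K a b v c m :^ g = K a b v c (m * r ^ y)%N.
Proof.
move=> n0 an hrt t0 hab vn hrc g /gen_prodgP [N [f hf ->]].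
elim: N f hf => [|N IH] f hf m.
  by exists 0; rewrite big_ord0 conjsg1 expn0 muln1.
rewrite big_ord_recr /= conjsgM.
have [y ->] := IH (fun i => f (widen_ord (leqnSn N) i)) (fun i => hf _) m.
case/set2P: (hf ord_max) => ->.
  by exists y; rewrite (@K_conj_a _ a b n r v c _ n0 an vn hrc hab).
by exists y.+1; rewrite (@K_conj_b _ a b n t r v c _ n0 an hrt t0 hab) expnSr mulnA.
Qed.

Lemma K_conj_bpow (gT : finGroupType) (a b : gT) n t r v c m j :
  0 < n -> a ^+ n = 1 -> (r ^ t)%N = 1 %[mod n] -> 0 < t -> a ^ b = a ^+ r ->
  K a b v c m :^ (b ^+ j) = K a b v c (m * r ^ j)%N.
Proof.
move=> n0 an hrt t0 hab; elim: j => [|j IH]; first by rewrite expg0 conjsg1 expn0 muln1.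
by rewrite expgSr conjsgM IH (@K_conj_b _ a b n t r v c _ n0 an hrt t0 hab) expnSr mulnA.
Qed.

Lemma zexpg_mod (gT : finGroupType) (a : gT) n (z : int) :
  0 < n -> a ^+ n = 1 -> zexpg a z = a ^+ `|(z %% n%:Z)%Z|%N.
Proof.
move=> n0 an; case: z => m /=.
  by rewrite modz_nat absz_nat (expg_mod _ an).
set p := `|(Negz m %% n%:Z)%Z|%N.
have hp : (p%:Z = Negz m %% n%:Z)%Z.
  rewrite /p gez0_abs // modz_ge0 //; lia.
have hd : n %| p + m.+1.
  have : (n%:Z %| (p + m.+1)%N%:Z)%Z.
    apply/dvdz_mod0P; rewrite PoszD hp modzDml NegzE.
    by rewrite GRing.addNr mod0z.
  by rewrite dvdzE !absz_nat.
apply/eqP; rewrite eq_invg_mul -expgD addnC -(divnK hd) mulnC expgM an expg1n.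
by [].
Qed.

Lemma Hsub_K (gT : finGroupType) (a b : gT) n v (al : int) (c : nat) :
  0 < n -> a ^+ n = 1 ->
  Hsub a b v al c%:Z = K a b v c `|(al %% n%:Z)%Z|%N.
Proof. by move=> n0 an; rewrite /Hsub /K (@zexpg_mod _ a n al n0 an). Qed.

Local Close Scope group_scope.


Local Open Scope group_scope.
Lemma morph_K (aT rT : finGroupType) (G : {group aT}) (f : {morphism G >-> rT})
    (a b : aT) v c m x :
  a \in G -> b \in G -> (f a) ^+ v = 1 -> x \in K a b v c m ->
  f x \in <[(f a) ^+ m * (f b) ^+ c]>.
Proof.
move=> aG bG hv xK.
have sS : [set a ^+ v; a ^+ m * b ^+ c] \subset G.
  by apply/subsetP => z /set2P [->|->]; rewrite ?groupM ?groupX.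
have xG : x \in G by apply: (subsetP _ _ xK); rewrite gen_subG.
have : f x \in f @* K a b v c m by apply: mem_morphim.
rewrite /K morphim_gen // => hx; apply: (subsetP _ _ hx); rewrite gen_subG.
apply/subsetP => _ /morphimP [z zG /set2P [->|->] ->].
  by rewrite morphX // hv group1.
by rewrite morphM ?groupX // !morphX // cycle_id.
Qed.

Lemma f_gen (aT rT : finGroupType) (G : {group aT}) (f : {morphism G >-> rT})
    (a b : aT) m c :
  a \in G -> b \in G -> f (a ^+ m * b ^+ c) = (f a) ^+ m * (f b) ^+ c.
Proof. by move=> aG bG; rewrite morphM ?groupX // !morphX. Qed.
Local Close Scope group_scope.

Theorem lemma3 (gT : finGroupType) (G : {group gT}) (a b : gT)
    (n t k r : nat) (v i c : nat) (alpha1 beta1 alpha2 beta2 : int) :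
  0 < n -> 0 < t ->
  r ^ t = 1 %[mod n] ->
  (k%:Z * (r%:Z - 1) = 0 %[mod n%:Z])%Z ->
  is_metacyclic_presentation G a b n t k r ->
  in_frakN n t k r v i c ->
  in_X n t k r v i c alpha1 beta1 ->
  in_X n t k r v i c alpha2 beta2 ->
  (exists2 g, g \in G &
     (Hsub a b v alpha1 (beta1 * (ordv v r)%:Z) :^ g)%g
       = Hsub a b v alpha2 (beta2 * (ordv v r)%:Z))
  <-> (beta1 = beta2 /\ exists j : int, congr_rpow v r alpha1 alpha2 j).
Proof.
move=> n0 t0 hrt hk [HG an hbt hab univ] _ hX1 hX2.
have hB1 : in_B n t k r (ordv v r) v%:Z alpha1 beta1 by case: hX1.
have hB2 : in_B n t k r (ordv v r) v%:Z alpha2 beta2 by case: hX2.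
have [b1 [[eb1 ob1 obt1 v0 vn] [hro hk1]]] := @inB_facts _ _ _ _ _ _ _ _ n0 hB1.
have [b2 [[eb2 ob2 obt2 _ _] [_ hk2]]] := @inB_facts _ _ _ _ _ _ _ _ n0 hB2.
subst beta1 beta2.
rewrite -!PoszM !(@Hsub_K _ a b n v _ _ n0 an).
clear hX1 hX2 hB1 hB2.
move: ob1 obt1 hro hk1 ob2 obt2 hk2; generalize (ordv v r) => o ob1 obt1 hro hk1 ob2 obt2 hk2.
have hp1 : ((`|(alpha1 %% n%:Z)%Z|%N)%:Z = alpha1 %[mod v%:Z])%Z by apply: pmod_v.
have hp2 : ((`|(alpha2 %% n%:Z)%Z|%N)%:Z = alpha2 %[mod v%:Z])%Z by apply: pmod_v.
move: hp1 hk1; generalize (`|(alpha1 %% n%:Z)%Z|%N) => p1 hp1 hk1.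
move: hp2 hk2; generalize (`|(alpha2 %% n%:Z)%Z|%N) => p2 hp2 hk2.
have o0 : 0 < o by move: ob1; rewrite muln_gt0 => /andP [].
have [t' et] : exists t', t = t'.+1 by exists t.-1; rewrite prednK.
have [v' ev] : exists v', v = v'.+1 by exists v.-1; rewrite prednK.
subst t v.
have hr : (r ^ t'.+1)%N = 1 %[mod v'.+1].
  by rewrite -(modn_dvdm _ vn) hrt (modn_dvdm _ vn).
have hkv : k * r = k %[mod v'.+1].
  by rewrite -(modn_dvdm _ vn) (@hk_nat _ _ _ hk) (modn_dvdm _ vn).
have [f [fa fb]] := univ _ (PA t' v') (PB k hr) (PA_rel1 _ _ _ vn)
   (@PB_rel2 t' v' r k hr hkv) (@PAB_rel3 t' v' r k hr).
have aG : a \in G by rewrite HG mem_gen ?set21.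
have bG : b \in G by rewrite HG mem_gen ?set22.
have hAv : ((f a) ^+ v'.+1 = 1)%g by rewrite fa; apply: PA_rel1.
have rc1 : (r ^ (b1 * o))%N = 1 %[mod v'.+1] by apply: rpow1.
have c1T : b1 * o %| t'.+1 by rewrite mulnC.
have c2T : b2 * o %| t'.+1 by rewrite mulnC.
have c10 : 0 < b1 * o by rewrite mulnC.
have c20 : 0 < b2 * o by rewrite mulnC.
rewrite (mulnC o b1) in hk1; rewrite (mulnC o b2) in hk2.
split.
- move=> [g gG hc].
  have gG' : g \in <<[set a; b]>>%g by rewrite -HG.
  have [y hy] := @K_conj_G _ a b n t'.+1 r v'.+1 (b1 * o) n0 an hrt (ltn0Sn t') hab vn rc1 g gG' p1.
  rewrite hy in hc.
  have x1 : (a ^+ (p1 * r ^ y) * b ^+ (b1 * o))%g \in K a b v'.+1 (b2 * o) p2.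
    by rewrite -hc mem_gen ?set22.
  have x2 : (a ^+ p2 * b ^+ (b2 * o))%g \in K a b v'.+1 (b1 * o) (p1 * r ^ y).
    by rewrite hc mem_gen ?set22.
  have m1 := @morph_K _ _ _ f _ _ _ _ _ _ aG bG hAv x1; rewrite (@f_gen _ _ _ f _ _ _ _ aG bG) fa fb in m1.
  have m2 := @morph_K _ _ _ f _ _ _ _ _ _ aG bG hAv x2; rewrite (@f_gen _ _ _ f _ _ _ _ aG bG) fa fb in m2.
  have [ec hm] := @R_main t' v' r k hr _ _ _ _ c10 c1T c20 c2T rc1 hk2 m1 m2.
  split.
    congr Posz; apply/eqP; rewrite -(eqn_pmul2r o0); exact/eqP.
  case: y hm {hy hc x1 x2 m1 m2} => [|y'] hm.
    exists (Posz 0) => /=; rewrite expr0 mulr1 -hp1 -hp2; apply/zcong_nat.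
    by rewrite -hm expn0 muln1.
  exists (Negz y') => /=.
  rewrite -modzMml -hp1 modzMml -hp2 -PoszX -PoszM; exact/zcong_nat.
- move=> [eb [j hj]]; case: eb => eb; subst b2.
  case: j hj => m hj /=.
    have hn : p1 = p2 * r ^ m %[mod v'.+1].
      by apply/zcong_nat; rewrite hp1 PoszM PoszX -modzMml hp2 modzMml hj.
    exists (b ^+ m)^-1%g; first by rewrite groupV groupX.
    rewrite (@K_eqmod _ a b _ _ _ _ hn) -(@K_conj_bpow _ a b n t'.+1 r v'.+1 (b1 * o) p2 m n0 an hrt (ltn0Sn t') hab).
    by rewrite conjsgK.
  have hn : p1 * r ^ m.+1 = p2 %[mod v'.+1].
    by apply/zcong_nat; rewrite hp2 PoszM PoszX -modzMml hp1 modzMml hj.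
  exists (b ^+ m.+1)%g; first by rewrite groupX.
  by rewrite (@K_conj_bpow _ a b n t'.+1 r v'.+1 (b1 * o) p1 m.+1 n0 an hrt (ltn0Sn t') hab) (@K_eqmod _ a b _ _ _ _ hn).
Qed.
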